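(* A commutative ring $R$ is a multiplication ring with finitely many minimal prime ideals if and only if there exists a faithful, Noetherian, distributive $R$-module.
   Context: All rings are commutative with $1$ and all modules are unital. A ring $R$ is a multiplication ring if whenever $I,J$ are ideals of $R$ with $J\subseteq I$, there is an ideal $I'$ of $R$ with $J=I'I$. A submodule $N$ of an $R$-module $M$ is distributive if $(M_1+M_2)\cap N=M_1\cap N+M_2\cap N$ for all submodules $M_1,M_2$ of $M$ (equivalently, $M_1\cap M_2+N=(M_1+N)\cap(M_2+N)$ for all submodules $M_1,M_2$); $M$ is a distributive module if all its submodules are distributive. $M$ is faithful if $\mathrm{ann}_R(M)=0$. *)

(* Defs.v *)
From mathcomp Require Import all_boot all_order all_algebra.
Set Implicit Arguments. Unset Strict Implicit. Unset Printing Implicit Defensive.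
Import GRing.Theory.
Local Open Scope ring_scope.

Section Ideals.
Variable R : comPzRingType.

Definition is_ideal (I : R -> Prop) : Prop :=
  [/\ I 0, (forall x y, I x -> I y -> I (x + y)) & (forall r x, I x -> I (r * x))].

Definition ideal_prod (I J : R -> Prop) : R -> Prop :=
  fun x => forall K, is_ideal K -> (forall a b, I a -> J b -> K (a * b)) -> K x.

Definition multiplication_ring : Prop :=
  forall I J : R -> Prop, is_ideal I -> is_ideal J -> (forall x, J x -> I x) ->
    exists I' : R -> Prop, is_ideal I' /\ (forall x, J x <-> ideal_prod I' I x).

Definition is_prime_ideal (P : R -> Prop) : Prop :=
  [/\ is_ideal P, ~ P 1 & (forall a b, P (a * b) -> P a \/ P b)].

Definition is_minimal_prime (P : R -> Prop) : Prop :=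
  is_prime_ideal P /\
  (forall Q, is_prime_ideal Q -> (forall x, Q x -> P x) -> forall x, P x -> Q x).

Definition finitely_many_minimal_primes : Prop :=
  exists (n : nat) (f : 'I_n -> R -> Prop),
    forall P, is_minimal_prime P -> exists i, forall x, P x <-> f i x.

End Ideals.

Section Modules.
Variables (R : comPzRingType) (M : lmodType R).

Definition is_submodule (N : M -> Prop) : Prop :=
  [/\ N 0, (forall x y, N x -> N y -> N (x + y)) & (forall (r : R) x, N x -> N (r *: x))].

Definition submod_sum (A B : M -> Prop) : M -> Prop :=
  fun x => exists a b, [/\ A a, B b & x = a + b].

Definition submod_cap (A B : M -> Prop) : M -> Prop := fun x => A x /\ B x.

Definition distributive_submodule (N : M -> Prop) : Prop :=
  forall M1 M2 : M -> Prop, is_submodule M1 -> is_submodule M2 ->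
    forall x, submod_cap (submod_sum M1 M2) N x <->
              submod_sum (submod_cap M1 N) (submod_cap M2 N) x.

Definition distributive_module : Prop :=
  forall N, is_submodule N -> distributive_submodule N.

Definition noetherian_module : Prop :=
  forall N : nat -> M -> Prop, (forall n, is_submodule (N n)) ->
    (forall n x, N n x -> N n.+1 x) ->
    exists m, forall n, (m <= n)%N -> forall x, N n x -> N m x.

Definition faithful_module : Prop :=
  forall r : R, (forall m : M, r *: m = 0) -> r = 0.

End Modules.

(* Main.v *)
Require Import Defs.
From mathcomp Require Import all_boot all_order all_algebra.
From mathcomp Require Import boolp classical_sets.
Set Implicit Arguments. Unset Strict Implicit. Unset Printing Implicit Defensive.
Import GRing.Theory.
Local Open Scope ring_scope.
From mathcomp Require Import ring zify.

Section Gen.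
Variables (R : comPzRingType) (M : lmodType R).

Fixpoint span (s : seq M) : M -> Prop :=
  match s with
  | [::] => fun x => x = 0
  | m :: s' => fun x => exists r y, span s' y /\ x = r *: m + y
  end.

Lemma span_sub s : is_submodule (span s).
Proof.
elim: s => [|m s [H0 HD HZ]] /=.
  split=> [//|x y -> ->|r x ->]; by rewrite ?addr0 ?scaler0.
split.
- by exists 0, 0; rewrite scale0r addr0.
- move=> x y [r [x' [Hx' ->]]] [r' [y' [Hy' ->]]].
  exists (r + r'), (x' + y'); split; first exact: HD.
  by rewrite scalerDl addrACA.
- move=> c x [r [x' [Hx' ->]]]; exists (c * r), (c *: x'); split; first exact: HZ.
  by rewrite scalerDr scalerA.
Qed.

Lemma span_mem s x : x \in s -> span s x.
Proof.
elim: s => [//|m s IH] /=; rewrite inE => /orP[/eqP ->|xs].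
  by exists 1, 0; split; [case: (span_sub s)|rewrite scale1r addr0].
by exists 0, x; split; [exact: IH|rewrite scale0r add0r].
Qed.

Lemma span_cons s m x : span s x -> span (m :: s) x.
Proof. by move=> H; exists 0, x; split=> //; rewrite scale0r add0r. Qed.

Lemma span_min (N : M -> Prop) s : is_submodule N -> (forall x, x \in s -> N x) ->
  forall x, span s x -> N x.
Proof.
move=> [N0 ND NZ]; elim: s => [|m s IH] Hs x /=; first by move=> ->.
move=> [r [y [Hy ->]]]; apply: ND; first by apply: NZ; apply: Hs; rewrite inE eqxx.
by apply: IH => // z zs; apply: Hs; rewrite inE zs orbT.
Qed.

Definition cyc (x : M) : M -> Prop := fun m => exists a, m = a *: x.

Lemma cyc_sub x : is_submodule (cyc x).
Proof.
split; first by exists 0; rewrite scale0r.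
- by move=> _ _ [a ->] [b ->]; exists (a + b); rewrite scalerDl.
- by move=> r _ [a ->]; exists (r * a); rewrite scalerA.
Qed.

Definition steph := forall x y : M, exists r : R,
  (exists a, r *: y = a *: x) /\ (exists b, (1 - r) *: x = b *: y).

Lemma distr_steph : distributive_module M -> steph.
Proof.
move=> D x y.
have := D (cyc x) (cyc_sub x) (cyc y) (cyc (x - y)) (cyc_sub y) (cyc_sub (x - y)) x.
case=> [H _].
have : submod_cap (submod_sum (cyc y) (cyc (x - y))) (cyc x) x.
  split; last by exists 1; rewrite scale1r.
  exists y, (x - y); split; [by exists 1; rewrite scale1r|by exists 1; rewrite scale1r|].
  by rewrite addrC subrK.
move=> /H [a [b [[[d Ha] [e Ha']] [[r Hb] [c Hb']] Hx]]].
exists r; split.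
  exists (r - c); rewrite scalerBl -Hb' Hb scalerBr.
  by rewrite opprB addrC subrK.
exists (d - r); rewrite [RHS]scalerBl -Ha scalerBl scale1r.
have -> : a = x - b by rewrite Hx addrK.
by rewrite Hb scalerBr opprB addrA addrAC addrK.
Qed.

Lemma steph_distr : steph -> distributive_module M.
Proof.
move=> S N [N0 ND NZ] M1 M2 [A0 AD AZ] [B0 BD BZ] z; split.
- move=> [[m1 [m2 [H1 H2 ->]]] Hz].
  have [r [[a Ha] [b Hb]]] := S m1 m2.
  exists (r *: (m1 + m2)), ((1 - r) *: (m1 + m2)); split.
  + split; last exact: NZ.
    by rewrite scalerDr Ha -scalerDl; apply: AZ.
  + split; last exact: NZ.
    by rewrite scalerDr Hb -scalerDl; apply: BZ.
  + by rewrite -scalerDl [r + _]addrC subrK scale1r.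
- move=> [a [b [[Ha Na] [Hb Nb] ->]]]; split; last exact: ND.
  by exists a, b.
Qed.


Lemma noeth_fg : noetherian_module M -> forall N, is_submodule N ->
  exists s, (forall x, x \in s -> N x) /\ (forall x, N x -> span s x).
Proof.
move=> HN N [N0 ND NZ].
pose g (s : seq M) : M :=
  match pselect (exists x, N x /\ ~ span s x) with
  | left H => projT1 (cid H) | right _ => 0 end.
have gN s : N (g s).
  by rewrite /g; case: pselect => [H|//]; case: (cid H) => x [].
have gS s : (exists x, N x /\ ~ span s x) -> ~ span s (g s).
  by rewrite /g; case: pselect => [H _|//]; case: (cid H) => x [].
pose fix sq k := if k is k'.+1 then g (sq k') :: sq k' else [::].
have sqN k x : x \in sq k -> N x.
  elim: k => [//|k IH] /=; rewrite inE => /orP[/eqP ->|]; [exact: gN|exact: IH].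
have [m Hm] := HN (fun k => span (sq k)) (fun k => span_sub (sq k))
  (fun k x H => span_cons (g (sq k)) H).
exists (sq m); split; first exact: sqN.
move=> x Nx; apply: contrapT => Hx.
have := Hm m.+1 (leqnSn m) (g (sq m)) (span_mem (mem_head _ _)).
by apply: gS; exists x.
Qed.

Definition good (s : seq M) (p : R * M) :=
  span s p.2 /\ forall y, span s y -> exists c, p.1 *: y = c *: p.2.

Lemma good_step s m : steph -> forall L : seq (R * M),
  (forall p, p \in L -> good s p) ->
  exists L', \sum_(p <- L') p.1 = \sum_(p <- L) p.1 /\
    forall p, p \in L' -> good (m :: s) p.
Proof.
move=> S; elim=> [|[t g] L IH] HL; first by exists [::]; rewrite big_nil.
have [L'' [E H'']] := IH (fun p pL => HL p (@mem_behead _ ((t, g) :: L) _ pL)).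
have [Hg Hy] := HL (t, g) (mem_head _ _).
have [r [[a' Ha'] [b Hb]]] := S g m.
exists ((t * r, g) :: (t * (1 - r), m) :: L''); split.
  by rewrite !big_cons E /= addrA -mulrDr [r + _]addrC subrK mulr1.
move=> p; rewrite !inE => /orP[/eqP ->|/orP[/eqP ->|pL]]; last exact: H''.
- split; first exact: span_cons.
  move=> _ [a [y' [Hy' ->]]] /=; have [c Hc] := Hy y' Hy'; rewrite /= in Hc.
  exists (t * a * a' + r * c).
  rewrite scalerDr scalerDl; congr (_ + _).
    by rewrite scalerA mulrAC -[(t * a * r) *: m]scalerA Ha' scalerA.
  by rewrite [t * r]mulrC -scalerA Hc scalerA.
- split; first exact: span_mem (mem_head _ _).
  move=> _ [a [y' [Hy' ->]]] /=; have [c Hc] := Hy y' Hy'; rewrite /= in Hc.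
  exists (t * (1 - r) * a + c * b).
  rewrite scalerDr scalerDl scalerA; congr (_ + _).
  rewrite [t * _]mulrC -[((1 - r) * t) *: _]scalerA Hc scalerA [(1 - r) * c]mulrC -[(c * (1 - r)) *: _]scalerA Hb scalerA.
  done.
Qed.

Lemma cover : steph -> forall s : seq M, exists cov : seq (R * M),
  \sum_(p <- cov) p.1 = 1 /\ forall p, p \in cov -> good s p.
Proof.
move=> S; elim=> [|m s [L [E H]]].
  exists [:: (1, 0)]; split; first by rewrite big_seq1.
  move=> p; rewrite inE => /eqP -> ; split=> //= y ->.
  by exists 0; rewrite !scaler0.
have [L' [E' H']] := good_step m S H.
by exists L'; rewrite E' E.
Qed.


Lemma span_cat s1 s2 x : span s1 x -> span (s1 ++ s2) x.
Proof.
apply: span_min; first exact: span_sub.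
by move=> y ys; apply: span_mem; rewrite mem_cat ys.
Qed.
Lemma span_catr s1 s2 x : span s2 x -> span (s1 ++ s2) x.
Proof.
apply: span_min; first exact: span_sub.
by move=> y ys; apply: span_mem; rewrite mem_cat ys orbT.
Qed.

Lemma sub_sum (N : M -> Prop) (T : Type) (s : seq T) (F : T -> M) :
  is_submodule N -> (forall i, N (F i)) -> N (\sum_(i <- s) F i).
Proof.
move=> [N0 ND NZ] HF; elim: s => [|i s IH]; rewrite ?big_nil ?big_cons //.
exact: ND.
Qed.

Lemma sub_sum_in (N : M -> Prop) (T : eqType) (s : seq T) (F : T -> M) :
  is_submodule N -> (forall i, i \in s -> N (F i)) -> N (\sum_(i <- s) F i).
Proof.
move=> [N0 ND NZ]; elim: s => [|i s IH] HF; rewrite ?big_nil ?big_cons //.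
apply: ND; first by apply: HF; rewrite inE eqxx.
by apply: IH => j js; apply: HF; rewrite inE js orbT.
Qed.

Lemma fg_noeth : (forall N, is_submodule N -> exists s,
    (forall x, x \in s -> N x) /\ (forall x, N x -> span s x)) ->
  noetherian_module M.
Proof.
move=> FG N HN Hstep.
have mono n m x : (n <= m)%N -> N n x -> N m x.
  move=> /subnK <-; elim: (m - n)%N => [//|k IH] /IH.
  by rewrite addSn; apply: Hstep.
pose U x := exists n, N n x.
have HU : is_submodule U.
  split; first by exists 0%N; case: (HN 0%N).
  - move=> x y [n Hx] [m Hy]; exists (maxn n m).
    case: (HN (maxn n m)) => _ HD _; apply: HD.
      by apply: (mono n) => //; rewrite leq_maxl.
    by apply: (mono m) => //; rewrite leq_maxr.
  - by move=> r x [n Hx]; exists n; case: (HN n) => _ _ HZ; apply: HZ.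
have [s [sU Us]] := FG U HU.
have [m Hm] : exists m, forall x, x \in s -> N m x.
  elim: s sU {Us} => [|y s IH] sU; first by exists 0%N.
  have [m1 Hm1] := IH (fun x xs => sU x (@mem_behead _ (y :: s) _ xs)).
  have [m2 Hm2] := sU y (mem_head _ _).
  exists (maxn m1 m2) => x; rewrite inE => /orP[/eqP ->|xs].
    by apply: (mono m2) => //; rewrite leq_maxr.
  by apply: (mono m1); [rewrite leq_maxl|apply: Hm1].
exists m => n _ x Hx.
by apply: (span_min (HN m) Hm); apply: Us; exists n.
Qed.

End Gen.

Section RingBasics.
Variable R : comPzRingType.
Implicit Types (I J A B P Q : R -> Prop) (x y z r a b : R).

Lemma idealM I x r : is_ideal I -> I x -> I (r * x).
Proof. by case=> _ _ H; apply: H. Qed.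
Lemma idealMr I x r : is_ideal I -> I x -> I (x * r).
Proof. by move=> HI Hx; rewrite mulrC; apply: idealM. Qed.
Lemma idealD I x y : is_ideal I -> I x -> I y -> I (x + y).
Proof. by case=> _ H _; apply: H. Qed.
Lemma ideal0 I : is_ideal I -> I 0.
Proof. by case. Qed.
Lemma idealN I x : is_ideal I -> I x -> I (- x).
Proof. by move=> HI Hx; rewrite -mulN1r; apply: idealM. Qed.
Lemma idealB I x y : is_ideal I -> I x -> I y -> I (x - y).
Proof. by move=> HI Hx Hy; apply: idealD => //; apply: idealN. Qed.
Lemma ideal_sum I (T : Type) (s : seq T) (F : T -> R) :
  is_ideal I -> (forall i, I (F i)) -> I (\sum_(i <- s) F i).
Proof.
move=> HI HF; elim: s => [|i s IH]; rewrite ?big_nil ?big_cons; first exact: ideal0.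
exact: idealD.
Qed.
Lemma idealMn I x n : is_ideal I -> I x -> I (x *+ n).
Proof. by move=> HI Hx; elim: n => [|n IH]; rewrite ?mulr0n ?mulrS; [apply: ideal0|apply: idealD]. Qed.
Lemma ideal_exp I x m n : is_ideal I -> I (x ^+ m) -> (m <= n)%N -> I (x ^+ n).
Proof. by move=> HI Hx Hmn; rewrite -(subnK Hmn) exprD; apply: idealM. Qed.

Lemma ideal1 I : is_ideal I -> I 1 -> forall x, I x.
Proof. by move=> HI H1 x; rewrite -(mulr1 x); apply: idealM. Qed.

Lemma prod_ideal I J : is_ideal (ideal_prod I J).
Proof.
split.
- by move=> K HK _; apply: ideal0.
- by move=> x y Hx Hy K HK HG; apply: idealD => //; [apply: Hx|apply: Hy].
- by move=> r x Hx K HK HG; apply: idealM => //; apply: Hx.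
Qed.
Lemma prod_gen I J a b : I a -> J b -> ideal_prod I J (a * b).
Proof. by move=> Ha Hb K HK HG; apply: HG. Qed.
Lemma prod_min I J K : is_ideal K -> (forall a b, I a -> J b -> K (a * b)) ->
  forall x, ideal_prod I J x -> K x.
Proof. by move=> HK HG x Hx; apply: Hx. Qed.
Lemma prod_subl I J : is_ideal I -> forall x, ideal_prod I J x -> I x.
Proof. by move=> HI; apply: prod_min => // a b Ha _; apply: idealMr. Qed.
Lemma prod_subr I J : is_ideal J -> forall x, ideal_prod I J x -> J x.
Proof. by move=> HJ; apply: prod_min => // a b _ Hb; apply: idealM. Qed.
Lemma prod_mono I J I' J' : (forall x, I x -> I' x) -> (forall x, J x -> J' x) ->
  forall x, ideal_prod I J x -> ideal_prod I' J' x.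
Proof.
move=> HI HJ; apply: prod_min; first exact: prod_ideal.
by move=> a b Ha Hb; apply: prod_gen; [apply: HI|apply: HJ].
Qed.
Lemma prod_comm I J x : ideal_prod I J x -> ideal_prod J I x.
Proof.
apply: prod_min; first exact: prod_ideal.
by move=> a b Ha Hb; rewrite mulrC; apply: prod_gen.
Qed.
Lemma prod_assoc I J K x :
  ideal_prod I (ideal_prod J K) x -> ideal_prod (ideal_prod I J) K x.
Proof.
apply: prod_min; first exact: prod_ideal.
move=> a z Ha.
have HK : is_ideal (fun z => ideal_prod (ideal_prod I J) K (a * z)).
  split; first by rewrite /= mulr0; exact: ideal0 (prod_ideal _ _).
  - by move=> u v Hu Hv; rewrite /= mulrDr; exact: idealD (prod_ideal _ _) Hu Hv.
  - by move=> r u Hu; rewrite /= mulrCA; exact: idealM (prod_ideal _ _) Hu.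
apply: (prod_min HK).
by move=> b c Hb Hc; rewrite mulrA; apply: prod_gen => //; apply: prod_gen.
Qed.

Definition pr x : R -> Prop := fun y => exists r, y = r * x.
Lemma pr_ideal x : is_ideal (pr x).
Proof.
split; first by exists 0; rewrite mul0r.
- by move=> _ _ [a ->] [b ->]; exists (a + b); rewrite mulrDl.
- by move=> r _ [a ->]; exists (r * a); rewrite mulrA.
Qed.
Lemma pr_self x : pr x x.
Proof. by exists 1; rewrite mul1r. Qed.

Definition colon J I : R -> Prop := fun c => forall y, I y -> J (c * y).
Lemma colon_ideal J I : is_ideal J -> is_ideal (colon J I).
Proof.
move=> HJ; split.
- by move=> y _; rewrite mul0r; apply: ideal0.
- by move=> u v Hu Hv y Hy; rewrite mulrDl; apply: idealD => //; [apply: Hu|apply: Hv].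
- by move=> r u Hu y Hy; rewrite -mulrA; apply: idealM => //; apply: Hu.
Qed.

Definition isum I J : R -> Prop := fun z => exists a b, [/\ I a, J b & z = a + b].
Lemma isum_ideal I J : is_ideal I -> is_ideal J -> is_ideal (isum I J).
Proof.
move=> HI HJ; split.
- by exists 0, 0; split; rewrite ?addr0; [exact: ideal0 HI|exact: ideal0 HJ|].
- move=> _ _ [a [b [Ha Hb ->]]] [a' [b' [Ha' Hb' ->]]].
  exists (a + a'), (b + b'); split; [exact: idealD HI Ha Ha'|exact: idealD HJ Hb Hb'|by rewrite addrACA].
- move=> r _ [a [b [Ha Hb ->]]].
  exists (r * a), (r * b); split; [exact: idealM HI Ha|exact: idealM HJ Hb|by rewrite mulrDr].
Qed.
Lemma isum_l I J x : is_ideal J -> I x -> isum I J x.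
Proof. by move=> HJ Hx; exists x, 0; split; rewrite ?addr0 //; exact: ideal0 HJ. Qed.
Lemma isum_r I J x : is_ideal I -> J x -> isum I J x.
Proof. by move=> HI Hx; exists 0, x; split; rewrite ?add0r //; exact: ideal0 HI. Qed.

Definition Ax A x : R -> Prop := fun y => exists a, A a /\ y = a * x.
Lemma Ax_ideal A x : is_ideal A -> is_ideal (Ax A x).
Proof.
move=> HA; split.
- by exists 0; split; rewrite ?mul0r //; exact: ideal0 HA.
- by move=> _ _ [a [Ha ->]] [b [Hb ->]]; exists (a + b); split; rewrite ?mulrDl //; exact: idealD HA Ha Hb.
- by move=> r _ [a [Ha ->]]; exists (r * a); split; rewrite ?mulrA //; exact: idealM HA Ha.
Qed.

Definition ann x : R -> Prop := fun r => r * x = 0.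
Lemma ann_ideal x : is_ideal (ann x).
Proof.
split; first by rewrite /ann mul0r.
- by move=> u v; rewrite /ann mulrDl => -> ->; rewrite addr0.
- by move=> r u; rewrite /ann -mulrA => ->; rewrite mulr0.
Qed.

Definition Kz P : R -> Prop := fun x => exists s, ~ P s /\ s * x = 0.
Lemma Kz_ideal P : is_prime_ideal P -> is_ideal (Kz P).
Proof.
case=> HP H1 Hpr; split.
- by exists 1; rewrite mul1r.
- move=> x y [s [Hs Hsx]] [t [Ht Hty]]; exists (s * t); split.
    by case/Hpr.
  by rewrite mulrDr mulrAC Hsx mul0r -mulrA Hty mulr0 addr0.
- by move=> r x [s [Hs Hsx]]; exists s; split=> //; rewrite mulrCA Hsx mulr0.
Qed.
Lemma Kz_sub P x : is_prime_ideal P -> Kz P x -> P x.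
Proof.
case=> HP H1 Hpr [s [Hs Hsx]].
have : P (s * x) by rewrite Hsx; apply: ideal0.
by case/Hpr.
Qed.

Lemma prime_exp P x n : is_prime_ideal P -> P (x ^+ n) -> P x.
Proof.
case=> HP H1 Hpr; elim: n => [|n IH]; first by rewrite expr0.
by rewrite exprS => /Hpr [].
Qed.

End RingBasics.

Section Mult.
Variable R : comPzRingType.
Implicit Types (I J A B P Q : R -> Prop) (x y z r a b : R).
Hypothesis HM : multiplication_ring R.

Lemma L0 P A : is_ideal P -> is_ideal A ->
  (forall y, P y -> ideal_prod A P y) -> forall x, P x -> exists a, A a /\ x = a * x.
Proof.
move=> HP HA HPA x Px.
have Hsub : forall y, pr x y -> P y by move=> y [r ->]; exact: idealM HP Px.
have [D [HD HDE]] := HM HP (pr_ideal x) Hsub.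
suff : Ax A x x by case=> a [Ha E]; exists a.
apply: (prod_min (Ax_ideal x HA)); last by apply/HDE; exact: pr_self.
move=> d p Hd Hp.
have HK : is_ideal (fun z => Ax A x (d * z)).
  split; first by rewrite /= mulr0; exact: ideal0 (Ax_ideal x HA).
  - by move=> u v Hu Hv; rewrite /= mulrDr; exact: idealD (Ax_ideal x HA) Hu Hv.
  - by move=> r u Hu; rewrite /= mulrCA; exact: idealM (Ax_ideal x HA) Hu.
apply: (prod_min HK _ (HPA p Hp)) => a p' Ha Hp'.
have [r Er] : pr x (d * p') by apply/HDE; apply: prod_gen.
by exists (a * r); split; [exact: idealMr|rewrite /= mulrCA Er mulrA].
Qed.

(* the ideal C with pr c = C I is inside colon (pr c) I *)
Lemma mult_colon I c : is_ideal I -> I c ->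
  ideal_prod (colon (pr c) I) I c.
Proof.
move=> HI Ic.
have sub : forall y, pr c y -> I y by move=> y [r ->]; exact: idealM HI Ic.
have [C [HC HCE]] := HM HI (pr_ideal c) sub.
have : ideal_prod C I c by apply/HCE; exact: pr_self.
apply: prod_mono => // u Cu y Iy.
by apply/HCE; apply: prod_gen.
Qed.

Lemma mult_steph : steph (R^o).
Proof.
move=> a b.
pose I := isum (pr a) (pr b).
have HI : is_ideal I by apply: isum_ideal; apply: pr_ideal.
pose E := isum (colon (pr a) I) (colon (pr b) I).
have HE : is_ideal E by apply: isum_ideal; apply: colon_ideal; apply: pr_ideal.
have Ia : I a by apply: isum_l; [exact: pr_ideal|exact: pr_self].
have Ib : I b by apply: isum_r; [exact: pr_ideal|exact: pr_self].
have IE : forall y, I y -> ideal_prod E I y.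
  move=> _ [_ [_ [[u ->] [v ->] ->]]].
  apply: (idealD (prod_ideal E I)).
    apply: (idealM _ (prod_ideal E I)).
    apply: prod_mono (mult_colon HI Ia) => // w Hw.
    by apply: isum_l => //; apply: colon_ideal; apply: pr_ideal.
  apply: (idealM _ (prod_ideal E I)).
  apply: prod_mono (mult_colon HI Ib) => // w Hw.
  by apply: isum_r => //; apply: colon_ideal; apply: pr_ideal.
have [e [Ee Ea]] := L0 HI HE IE Ia.
have [e' [Ee' Eb]] := L0 HI HE IE Ib.
pose f := (1 - e) * (1 - e').
have Ef : E f.
  apply: isum_l; first by apply: colon_ideal; apply: pr_ideal.
  move=> _ [_ [_ [[u ->] [v ->] ->]]]; exists 0.
  have Fa : (1 - e) * a = 0 by rewrite mulrBl mul1r -Ea subrr.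
  have Fb : (1 - e') * b = 0 by rewrite mulrBl mul1r -Eb subrr.
  have -> : f * (u * a + v * b) = u * (1 - e') * ((1 - e) * a) + v * (1 - e) * ((1 - e') * b).
    by rewrite /f; ring.
  by rewrite Fa Fb !mulr0 addr0 mul0r.
have E1 : E 1.
  have -> : 1 = f + e + e' - e * e' by rewrite /f mulrBl !mulrBr !mul1r !mulr1; ring.
  apply: idealB => //; last exact: idealMr.
  by apply: idealD => //; apply: idealD.
case: E1 => c [d [Hc Hd Ecd]].
exists c; split.
  by have [r Er] := Hc b Ib; exists r.
have [r Er] := Hd a Ia; exists r.
by rewrite Ecd addrC addKr.
Qed.
End Mult.

Section Zorns.
Variable R : comPzRingType.
Implicit Types (I J A B P Q : R -> Prop) (x y z r a b : R).

Lemma zero_ideal : is_ideal (fun y : R => y = 0).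
Proof.
by split=> [//|x y -> ->|r x ->]; rewrite ?addr0 ?mulr0.
Qed.

Lemma notnot_eq (Q : R -> Prop) : (fun x => ~ ~ Q x) = Q.
Proof. apply: funext => x; apply: propext; split; [exact: contrapT|by move=> ? ?]. Qed.

Lemma chain_common (G : set (set R)) X Y :
  total_on G subset -> G X -> G Y ->
  exists Z, [/\ G Z, (X `<=` Z)%classic & (Y `<=` Z)%classic].
Proof.
move=> tot GX GY; case: (tot X Y GX GY) => H.
  by exists Y; split.
by exists X; split.
Qed.

Lemma ZP A (S : R -> Prop) : is_ideal A -> S 1 ->
  (forall u v, S u -> S v -> S (u * v)) -> (forall x, A x -> ~ S x) ->
  exists Q, [/\ is_prime_ideal Q, forall x, A x -> Q x & forall x, Q x -> ~ S x].
Proof.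
move=> HA S1 SM AS.
pose good (X : set R) := [/\ is_ideal X, forall x, A x -> X x & forall x, X x -> ~ S x].
pose F : set (set R) := fun X => X = set0 \/ good X.
have FG X x : F X -> X x -> good X by case=> [->|//].
have [X0 [FX0 Xmax]] : exists X0, F X0 /\ forall B, (X0 `<` B)%classic -> ~ F B.
  apply: Zorn_bigcup => G GF tot.
  case: (pselect (exists X x, G X /\ X x)) => [[X1 [x1 [GX1 X1x]]]|none]; last first.
    left; apply: funext => x; apply: propext; split=> // -[X GX Xx].
    by apply: none; exists X, x.
  have mg X x : G X -> X x -> good X by move=> GX Xx; apply: (FG X x) => //; apply: GF.
  have [[X10 X1D X1Z] X1A X1S] := mg _ _ GX1 X1x.
  right; split.
  - split.
    + by exists X1.
    + move=> u v [X GX Xu] [Y GY Yv].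
      have [Z [GZ XZ YZ]] := chain_common tot GX GY.
      have [[_ ZD _] _ _] := mg _ _ GZ (XZ _ Xu).
      by exists Z => //; apply: ZD; [apply: XZ|apply: YZ].
    + move=> r u [X GX Xu]; have [[_ _ XZ] _ _] := mg _ _ GX Xu.
      by exists X => //; apply: XZ.
  - by move=> x Ax; exists X1 => //; apply: X1A.
  - by move=> x [X GX Xx]; have [_ _ XS] := mg _ _ GX Xx; apply: XS.
have gX0 : good X0.
  case: FX0 => [E|//]; exfalso; apply: (Xmax A); last by right.
  rewrite E; split=> // H.
  by have := H 0 (ideal0 HA).
have [[X00 X0D X0Z] X0A X0S] := gX0.
exists X0; split=> //; split=> //.
  by move=> X01; apply: (X0S 1).
move=> a b Xab; apply: contrapT => /not_orP [Na Nb].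
have ext c : ~ X0 c -> exists u r, X0 u /\ S (u + r * c).
  move=> Nc; apply: contrapT => H.
  have Hi : is_ideal (isum X0 (pr c)) by apply: isum_ideal => //; apply: pr_ideal.
  apply: (Xmax (isum X0 (pr c))).
    split; first by move=> x Hx; apply: isum_l => //; apply: pr_ideal.
    by move=> sub; apply: Nc; apply: sub; apply: isum_r => //; apply: pr_self.
  right; split=> //.
    by move=> x Ax; apply: isum_l; [apply: pr_ideal|apply: X0A].
  move=> _ [u [_ [Xu [r ->] ->]]] Sx.
  by apply: H; exists u, r.
have [u [r [Xu Su]]] := ext a Na.
have [u' [r' [Xu' Su']]] := ext b Nb.
apply: (X0S _ _ (SM _ _ Su Su')).
have -> : (u + r * a) * (u' + r' * b) = (u' + r' * b) * u + (r * a) * u' + (r * r') * (a * b).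
  by ring.
exact: (X0D _ _ (X0D _ _ (X0Z _ _ Xu) (X0Z _ _ Xu')) (X0Z _ _ Xab)).
Qed.

Lemma Z1 Q : is_prime_ideal Q ->
  exists P, is_minimal_prime P /\ forall x, P x -> Q x.
Proof.
move=> HQ.
pose good (X : set R) := is_prime_ideal (fun x => ~ X x) /\ forall x, ~ X x -> Q x.
pose F : set (set R) := fun X => X = set0 \/ good X.
have FG X x : F X -> X x -> good X by case=> [->|//].
have [X0 [FX0 Xmax]] : exists X0, F X0 /\ forall B, (X0 `<` B)%classic -> ~ F B.
  apply: Zorn_bigcup => G GF tot.
  case: (pselect (exists X x, G X /\ X x)) => [[X1 [x1 [GX1 X1x]]]|none]; last first.
    left; apply: funext => x; apply: propext; split=> // -[X GX Xx].
    by apply: none; exists X, x.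
  have mg X x : G X -> X x -> good X by move=> GX Xx; apply: (FG X x) => //; apply: GF.
  right; split; [split; [split| |]|].
  - by move=> [X GX X0]; have [[[H0 _ _] _ _] _] := mg _ _ GX X0; apply: H0.
  - move=> u v Nu Nv [X GX Xuv]; have [[[_ HD _] _ _] _] := mg _ _ GX Xuv.
    by apply: (HD u v) => // [Xu|Xv]; [apply: Nu|apply: Nv]; exists X.
  - move=> r u Nu [X GX Xru]; have [[[_ _ HZ] _ _] _] := mg _ _ GX Xru.
    by apply: (HZ r u) => // Xu; apply: Nu; exists X.
  - move=> N1; apply: N1; exists X1 => //.
    have [[_ H1 _] _] := mg _ _ GX1 X1x; exact: contrapT.
  - move=> a b Nab; apply: contrapT => /not_orP [/contrapT [X GX Xa] /contrapT [Y GY Yb]].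
    have [Z [GZ XZ YZ]] := chain_common tot GX GY.
    have [[_ _ Hp] _] := mg _ _ GZ (XZ _ Xa).
    have : ~ Z (a * b) by move=> Zab; apply: Nab; exists Z.
    by move/Hp => [] H; apply: H; [apply: XZ|apply: YZ].
  - move=> x Nx; have [_ HQ1] := mg _ _ GX1 X1x.
    by apply: HQ1 => Xx; apply: Nx; exists X1.
have gX0 : good X0.
  case: FX0 => [E|//]; exfalso; apply: (Xmax (fun x => ~ Q x)).
    rewrite E; split=> // H.
    by have [_ Q1 _] := HQ; apply: (H 1).
  right; split; last by move=> x /contrapT.
  by rewrite (notnot_eq Q).
case: gX0 => HP PQ.
exists (fun x => ~ X0 x); split=> //; split=> // Q' HQ' sub x Px.
have : ((fun x => ~ Q' x) `<=` X0)%classic.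
  apply: contrapT => Nsub; apply: (Xmax (fun x => ~ Q' x)).
    by split=> // y X0y Q'y; apply: (sub y Q'y).
  right; split; last by move=> y /contrapT /sub /PQ.
  by rewrite (notnot_eq Q').
by move=> H; apply: contrapT => /H.
Qed.

Lemma F2 P x : is_minimal_prime P -> P x -> exists s k, ~ P s /\ s * x ^+ k = 0.
Proof.
move=> [HP Pmin] Px; apply: contrapT => H.
pose S z := exists s k, ~ P s /\ z = s * x ^+ k.
have [HPi P1 Ppr] := HP.
have S1 : S 1 by exists 1, 0%N; rewrite expr0 mulr1.
have SM : forall u v, S u -> S v -> S (u * v).
  move=> _ _ [s [k [Ps ->]]] [s' [k' [Ps' ->]]].
  exists (s * s'), (k + k')%N; split; first by case/Ppr.
  by rewrite exprD; ring.
have AS : forall y, y = 0 -> ~ S y.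
  by move=> y -> [s [k [Ps E]]]; apply: H; exists s, k; split.
have [Q [HQ _ QS]] := @ZP (fun y => y = 0) S zero_ideal S1 SM AS.
have QP : forall y, Q y -> P y.
  move=> y Qy; apply: contrapT => Py; apply: (QS y Qy).
  by exists y, 0%N; rewrite expr0 mulr1.
have Qx := Pmin Q HQ QP x Px.
apply: (QS x Qx); exists 1, 1%N; split=> //.
by rewrite expr1 mul1r.
Qed.

End Zorns.

Section Dir1.
Variable R : comPzRingType.
Implicit Types (I J A B P Q : R -> Prop) (x y z r a b : R).
Hypothesis HM : multiplication_ring R.

Lemma prime_ideal P : is_prime_ideal P -> is_ideal P.
Proof. by case. Qed.

Lemma prime_one P : is_prime_ideal P -> ~ P 1.
Proof. by case. Qed.

Lemma prime_1sub P q : is_prime_ideal P -> P q -> ~ P (1 - q).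
Proof.
move=> HP Pq P1q; apply: (prime_one HP).
by rewrite -(subrK q 1); apply: idealD (prime_ideal HP) P1q Pq.
Qed.

Lemma L1 P Q s x : is_prime_ideal P -> is_prime_ideal Q ->
  (forall y, P y -> Q y) -> Q s -> ~ P s -> P x -> exists q, Q q /\ x = q * x.
Proof.
move=> HP HQ sub Qs Ps Px.
have [C [HC HCE]] := HM (prime_ideal HQ) (prime_ideal HP) sub.
have CP c : C c -> P c.
  move=> Cc; have : P (c * s) by apply/HCE; apply: prod_gen.
  by case: HP => _ _ /(_ _ _ _) H /H [].
apply: (L0 HM (prime_ideal HP) (prime_ideal HQ)) => // y /HCE Py.
by apply: prod_comm; apply: prod_mono Py.
Qed.

Lemma L2 P P' x y : is_prime_ideal P -> is_prime_ideal P' ->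
  P x -> ~ P' x -> P' y -> ~ P y -> exists p p', [/\ P p, P' p' & p + p' = 1].
Proof.
move=> HP HP' Px P'x P'y Py.
have HA := isum_ideal (prime_ideal HP) (prime_ideal HP').
have sub : forall z, P z -> isum P P' z by move=> z; apply: isum_l (prime_ideal HP').
have [C [HC HCE]] := HM HA (prime_ideal HP) sub.
have CP c : C c -> P c.
  move=> Cc; have : P (c * y).
    by apply/HCE; apply: prod_gen => //; apply: isum_r (prime_ideal HP) P'y.
  by case: HP => _ _ /(_ _ _ _) H /H [].
have [a [[p [p' [Pp P'p' ->]]] Ex]] : exists a, isum P P' a /\ x = a * x.
  apply: (L0 HM (prime_ideal HP) HA) => // z /HCE Pz.
  by apply: prod_comm; apply: prod_mono Pz.
exists p, (1 - p); split=> //; last by rewrite addrC subrK.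
have H0 : P' ((1 - (p + p')) * x) by rewrite mulrBl mul1r -Ex subrr; apply: ideal0 (prime_ideal HP').
have : P' (1 - (p + p')).
  by case: HP' H0 => _ _ /(_ _ _ _) H /H [].
move=> H1; have -> : 1 - p = (1 - (p + p')) + p' by ring.
by apply: idealD (prime_ideal HP') H1 P'p'.
Qed.

Lemma K1 x : (forall P, is_minimal_prime P -> Kz P x) -> x = 0.
Proof.
move=> HK; apply: contrapT => nx.
have S1 : (fun z : R => z = 1) 1 by [].
have SM : forall u v : R, u = 1 -> v = 1 -> u * v = 1 by move=> u v -> ->; rewrite mulr1.
have AS : forall y, ann x y -> ~ (y = 1) by move=> y Hy E; apply: nx; rewrite -[x]mul1r -E.
have [Q [HQ annQ _]] := ZP (ann_ideal x) S1 SM AS.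
have [P [HP PQ]] := Z1 HQ.
have [s [Ps sx]] := HK P HP.
have Px : P x := Kz_sub (proj1 HP) (ex_intro _ s (conj Ps sx)).
have [q [Qq Eq]] := L1 (proj1 HP) HQ PQ (annQ s sx) Ps Px.
apply: (prime_1sub HQ Qq); apply: annQ.
by rewrite /ann mulrBl mul1r -Eq subrr.
Qed.

Lemma incomp P P' : is_minimal_prime P -> is_minimal_prime P' -> P <> P' ->
  exists x, P x /\ ~ P' x.
Proof.
move=> [HP Pm] [HP' P'm] NE; apply: contrapT => H; apply: NE.
have sub : forall x, P x -> P' x.
  by move=> x Px; apply: contrapT => P'x; apply: H; exists x.
apply: funext => x; apply: propext; split; first exact: sub.
exact: P'm P HP sub x.
Qed.

Lemma K2help Pi P Q : is_minimal_prime Pi -> is_minimal_prime P ->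
  is_prime_ideal Q -> (forall z, P z -> Q z) -> P <> Pi ->
  (forall z, Kz Pi z -> Q z) -> False.
Proof.
move=> HPi HP HQ PQ NE KQ.
have [x [Px Pix]] := incomp HP HPi NE.
have [y [Piy Py]] := incomp HPi HP (nesym NE).
have [p [p' [Pp Pip' E]]] := L2 (proj1 HP) (proj1 HPi) Px Pix Piy Py.
have [s [k [Pis Es]]] := F2 HPi Pip'.
have Qp' : Q p' by apply: (prime_exp (n := k)) => //; apply: KQ; exists s.
apply: (prime_one HQ); rewrite -E.
by apply: idealD (prime_ideal HQ) (PQ _ Pp) Qp'.
Qed.

Lemma K2 P1 P2 : is_minimal_prime P1 -> is_minimal_prime P2 -> P1 <> P2 ->
  exists a b, [/\ Kz P1 a, Kz P2 b & a + b = 1].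
Proof.
move=> H1 H2 NE; apply: contrapT => H.
have HA := isum_ideal (Kz_ideal (proj1 H1)) (Kz_ideal (proj1 H2)).
have S1 : (fun z : R => z = 1) 1 by [].
have SM : forall u v : R, u = 1 -> v = 1 -> u * v = 1 by move=> u v -> ->; rewrite mulr1.
have AS : forall y, isum (Kz P1) (Kz P2) y -> ~ (y = 1).
  by move=> y [a [b [Ha Hb Ey]]] E; apply: H; exists a, b; split=> //; rewrite -Ey.
have [Q [HQ AQ _]] := ZP HA S1 SM AS.
have [P [HP PQ]] := Z1 HQ.
case: (pselect (P = P1)) => [EP|NP].
  apply: (K2help H2 HP HQ PQ); first by rewrite EP.
  by move=> z Kz; apply: AQ; apply: isum_r (Kz_ideal (proj1 H1)) Kz.
apply: (K2help H1 HP HQ PQ NP).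
by move=> z Kz; apply: AQ; apply: isum_l (Kz_ideal (proj1 H2)) Kz.
Qed.

Hypothesis HF : finitely_many_minimal_primes R.

Lemma Ann P : is_minimal_prime P ->
  exists c, Kz P (1 - c) /\ forall y, Kz P y -> c * y = 0.
Proof.
move=> HP; have [n [f Hf]] := HF.
pose cond j := is_minimal_prime (f j) /\ f j <> P.
have Hex : forall j, exists bj,
    (cond j /\ Kz P (1 - bj) /\ Kz (f j) bj) \/ (~ cond j /\ bj = 1).
  move=> j; case: (pselect (cond j)) => [[Hm Hne]|Nc]; last by exists 1; right.
  have [a [bj [Ka Kb E]]] := K2 HP Hm (nesym Hne).
  exists bj; left; split=> //; split=> //.
  by rewrite -E addrK.
have [b Hb] := choice Hex.
exists (\prod_(j < n) b j); split.
  apply: (big_ind (fun u => Kz P (1 - u))).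
  - by rewrite subrr; apply: ideal0 (Kz_ideal (proj1 HP)).
  - move=> u v Hu Hv.
    have -> : 1 - u * v = (1 - u) + u * (1 - v) by ring.
    by apply: idealD (Kz_ideal (proj1 HP)) Hu (idealM _ (Kz_ideal (proj1 HP)) Hv).
  - move=> j _; case: (Hb j) => [[_ [H _]]|[_ ->]] //.
    by rewrite subrr; apply: ideal0 (Kz_ideal (proj1 HP)).
move=> y Ky; apply: K1 => P' HP'.
have [j Ej] := Hf P' HP'.
have EP' : P' = f j by apply: funext => x; apply: propext; apply: Ej.
case: (pselect (f j = P)) => [EjP|NjP].
  by rewrite EP' EjP; apply: idealM (Kz_ideal (proj1 HP)) Ky.
have cj : cond j by split=> //; rewrite -EP'.
case: (Hb j) => [[_ [_ Kbj]]|[//]].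
rewrite EP' (bigD1 j) //= -mulrA.
by apply: idealMr (Kz_ideal _) Kbj; rewrite -EP'; case: HP'.
Qed.

Lemma loc_princ I : is_ideal I -> exists L : seq (R * R),
  \sum_(p <- L) p.1 = 1 /\
  forall p, p \in L -> I p.2 /\ forall y, I y -> exists r, p.1 * y = r * p.2.
Proof.
move=> HI.
pose T z := exists L : seq (R * R), z = \sum_(p <- L) p.1 /\
  forall p, p \in L -> I p.2 /\ forall y, I y -> exists r, p.1 * y = r * p.2.
apply: contrapT => NT.
have HT : is_ideal T.
  split.
  - by exists [::]; rewrite big_nil.
  - move=> _ _ [L1 [-> H1]] [L2 [-> H2]]; exists (L1 ++ L2); split; first by rewrite big_cat.
    by move=> p; rewrite mem_cat => /orP[/H1|/H2].
  - move=> r _ [L [-> HL]]; exists [seq (r * p.1, p.2) | p <- L]; split.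
      by rewrite big_map mulr_sumr.
    move=> _ /mapP [p pL ->] /=; have [Ip Hp] := HL p pL; split=> // y Iy.
    by have [c Hc] := Hp y Iy; exists (r * c); rewrite -mulrA Hc mulrA.
have S1 : (fun z : R => z = 1) 1 by [].
have SM : forall u v : R, u = 1 -> v = 1 -> u * v = 1 by move=> u v -> ->; rewrite mulr1.
have AS : forall y, T y -> ~ (y = 1).
  by move=> y [L [Ey HL]] E; apply: NT; exists L; split=> //; rewrite -Ey.
have [Q [HQ TQ _]] := ZP HT S1 SM AS.
have CT x c : I x -> colon (pr x) I c -> T c.
  move=> Ix Hc; exists [:: (c, x)]; split; first by rewrite big_seq1.
  by move=> p; rewrite inE => /eqP -> /=; split=> // y /Hc [r ->]; exists r.
have IQ : forall y, I y -> ideal_prod Q I y.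
  move=> y Iy; apply: prod_mono (mult_colon HM HI Iy) => // c Hc.
  by apply: TQ; apply: (CT y).
have [P [HP PQ]] := Z1 HQ.
have [c [Kc Hc]] := Ann HP.
have IK : forall x, I x -> Kz P x.
  move=> x Ix; have [q [Qq Eq]] := L0 HM HI (prime_ideal HQ) IQ Ix.
  exists (1 - q); split; first by move=> /PQ; apply: prime_1sub.
  by rewrite mulrBl mul1r -Eq subrr.
have Tc : T c.
  exists [:: (c, 0)]; split; first by rewrite big_seq1.
  move=> p; rewrite inE => /eqP -> /=; split; first exact: ideal0 HI.
  by move=> y /IK /Hc ->; exists 0; rewrite mul0r.
apply: (prime_1sub HQ (TQ c Tc)).
by apply: PQ; apply: Kz_sub (proj1 HP) Kc.
Qed.

Lemma dir1_fg I : is_ideal I -> exists rs : seq R,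
  (forall r, r \in rs -> I r) /\ forall x, I x -> span (M := R^o) rs x.
Proof.
move=> HI; have [L [E HL]] := loc_princ HI.
exists [seq p.2 | p <- L]; split.
  by move=> _ /mapP [p pL ->]; case: (HL p pL).
move=> x Ix; rewrite -[x]mul1r -E mulr_suml.
apply: (@sub_sum_in _ R^o (span (M := R^o) [seq p.2 | p <- L]) _ L (fun p => p.1 * x) (span_sub _)).
move=> p pL; have [Ip Hp] := HL p pL; have [r ->] := Hp x Ix.
have := span_sub (M := R^o) [seq p.2 | p <- L]; case=> _ _ HZ.
by apply: HZ; apply: span_mem; apply/mapP; exists p.
Qed.

End Dir1.

Section Radical.
Variable R : comPzRingType.

Lemma powsum (L : R -> Prop) a b m n : is_ideal L -> L (a ^+ m) -> L (b ^+ n) ->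
  L ((a + b) ^+ (m + n)).
Proof.
move=> HL Ha Hb; rewrite exprDn; apply: ideal_sum => // i.
apply: idealMn => //.
have [le|lt] := leqP n i.
  by apply: idealM => //; apply: ideal_exp Hb le.
apply: idealMr => //; apply: (ideal_exp HL Ha).
by lia.
Qed.

Lemma rad_sum (L : R -> Prop) (T : eqType) (s : seq T) (F : T -> R) :
  is_ideal L -> (forall i, i \in s -> L (F i ^+ 2)) ->
  exists n, L ((\sum_(i <- s) F i) ^+ n).
Proof.
move=> HL; elim: s => [|i s IH] HF.
  by exists 1%N; rewrite big_nil expr1; apply: ideal0.
have [n Hn] := IH (fun j js => HF j (@mem_behead _ (i :: s) _ js)).
exists (2 + n)%N; rewrite big_cons; apply: powsum => //.
by apply: HF; rewrite inE eqxx.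
Qed.

End Radical.

Section Dir2.
Variables (R : comPzRingType) (M : lmodType R).
Hypotheses (HFa : faithful_module M) (HN : noetherian_module M)
  (HD : distributive_module M).
Variable cov : seq (R * M).
Hypothesis Hsum : \sum_(p <- cov) p.1 = 1.
Hypothesis Hcov : forall p, p \in cov -> forall y, exists c, p.1 *: y = c *: p.2.

Lemma kill p z : p \in cov -> z *: p.2 = 0 -> p.1 * z = 0.
Proof.
move=> pc Hz; apply: HFa => m; have [c Hc] := Hcov pc m.
by rewrite mulrC -scalerA Hc scalerA mulrC -scalerA Hz scaler0.
Qed.

Lemma arith2 : steph (R^o).
Proof.
move=> a b.
have S := distr_steph HD.
suff gen : forall L : seq (R * M), (forall p, p \in L -> p \in cov) ->
    exists r : R, (exists al, r * b = al * a) /\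
    (exists be, (\sum_(p <- L) p.1 - r) * a = be * b).
  have [r [[al Hal] [be Hbe]]] := gen cov (fun p h => h).
  by exists r; split; [exists al|exists be; rewrite -Hsum].
elim=> [|[t g] L IH] Hin.
  by exists 0; split; [exists 0; rewrite !mul0r|exists 0; rewrite big_nil subr0 !mul0r].
have [r [ral rbe]] := IH (fun p pL => Hin p (@mem_behead _ ((t, g) :: L) _ pL)).
have pin : (t, g) \in cov by apply: Hin; apply: mem_head.
have [s [[u Hu] [v Hv]]] := S (a *: g) (b *: g).
have E1 : t * s * b = t * u * a.
  have Hz : (s * b - u * a) *: g = 0 by rewrite scalerBl -!scalerA Hu subrr.
  have K := kill pin Hz.
  by apply/eqP; rewrite -subr_eq0; apply/eqP; rewrite -K /=; ring.
have E2 : t * (1 - s) * a = t * v * b.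
  have Hz : ((1 - s) * a - v * b) *: g = 0 by rewrite scalerBl -!scalerA Hv subrr.
  have K := kill pin Hz.
  by apply/eqP; rewrite -subr_eq0; apply/eqP; rewrite -K /=; ring.
case: ral => al Hal; case: rbe => be Hbe.
exists (t * s + r); split.
  by exists (t * u + al); rewrite mulrDl E1 Hal mulrDl.
exists (t * v + be); rewrite big_cons /=.
have -> : (t + \sum_(j <- L) j.1 - (t * s + r)) * a =
  t * (1 - s) * a + (\sum_(j <- L) j.1 - r) * a by ring.
by rewrite E2 Hbe mulrDl.
Qed.


Lemma fg_one (I : R -> Prop) p : is_ideal I -> p \in cov ->
  exists rs : seq R, (forall r, r \in rs -> I r) /\
    forall x, I x -> span (M := R^o) rs (p.1 * x).
Proof.
move=> HI pin.
pose N (m : M) := exists r, I r /\ m = r *: p.2.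
have HNs : is_submodule N.
  split.
  - by exists 0; split; [exact: ideal0 HI|rewrite scale0r].
  - move=> _ _ [r [Ir ->]] [r' [Ir' ->]]; exists (r + r'); split; last by rewrite scalerDl.
    exact: idealD HI Ir Ir'.
  - move=> c _ [r [Ir ->]]; exists (c * r); split; last by rewrite scalerA.
    exact: idealM HI Ir.
have [s [sN Ns]] := noeth_fg HN HNs.
have [rs [rsI Hrs]] : exists rs : seq R, (forall r, r \in rs -> I r) /\
    forall m, span s m -> exists r, span (M := R^o) rs r /\ m = r *: p.2.
  elim: s sN {Ns} => [|m0 s IH] sN.
    by exists [::]; split=> // m ->; exists 0; split=> //; rewrite scale0r.
  have [rs [rsI Hrs]] := IH (fun x xs => sN x (@mem_behead _ (m0 :: s) _ xs)).
  have [r0 [Ir0 E0]] := sN m0 (mem_head _ _).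
  exists (r0 :: rs); split.
    by move=> r; rewrite inE => /orP[/eqP ->|/rsI].
  move=> _ [c [m' [Hm' ->]]]; have [r' [Hr' ->]] := Hrs m' Hm'.
  exists (c * r0 + r'); split; first by exists c, r'.
  by rewrite E0 scalerA scalerDl.
exists rs; split=> // x Ix.
have [r [Hr Er]] := Hrs _ (Ns _ (ex_intro _ x (conj Ix (erefl _)))).
have Hz : (x - r) *: p.2 = 0 by rewrite scalerBl Er subrr.
have K := kill pin Hz.
have -> : p.1 * x = p.1 * r by apply/eqP; rewrite -subr_eq0 -mulrBr K.
by case: (span_sub (M := R^o) rs) => _ _ HZ; apply: HZ.
Qed.

Lemma fg2 (I : R -> Prop) : is_ideal I ->
  exists rs : seq R, (forall r, r \in rs -> I r) /\
    forall x, I x -> span (M := R^o) rs x.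
Proof.
move=> HI.
suff gen : forall L : seq (R * M), (forall p, p \in L -> p \in cov) ->
  exists rs : seq R, (forall r, r \in rs -> I r) /\
    forall x, I x -> span (M := R^o) rs ((\sum_(p <- L) p.1) * x).
  have [rs [rsI Hrs]] := gen cov (fun p h => h).
  by exists rs; split=> // x /Hrs; rewrite Hsum mul1r.
elim=> [|p L IH] Hin.
  by exists [::]; split=> // x _; rewrite big_nil mul0r.
have [rs [rsI Hrs]] := IH (fun q qL => Hin q (@mem_behead _ (p :: L) _ qL)).
have [rs' [rsI' Hrs']] := fg_one HI (Hin p (mem_head _ _)).
exists (rs' ++ rs); split.
  by move=> r; rewrite mem_cat => /orP[/rsI'|/rsI].
move=> x Ix; rewrite big_cons mulrDl.
case: (span_sub (M := R^o) (rs' ++ rs)) => _ HDs _; apply: HDs.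
  exact: span_cat (Hrs' x Ix).
exact: span_catr (Hrs x Ix).
Qed.

Lemma mult2 : multiplication_ring R.
Proof.
move=> I J HI HJ JI.
have [rs [rsI Hrs]] := fg2 HI.
have [cv [Ecv Hcv]] := cover (arith2) rs.
exists (colon J I); split; first exact: colon_ideal.
move=> x; split; last first.
  move=> H; apply: (prod_min HJ _ H) => c y Hc Iy; exact: Hc y Iy.
move=> Jx.
pose L z := ideal_prod (colon J I) I (z * x).
have HL : is_ideal L.
  split.
  - by rewrite /L mul0r; exact: ideal0 (prod_ideal _ _).
  - by move=> u v Hu Hv; rewrite /L mulrDl; exact: idealD (prod_ideal _ _) Hu Hv.
  - by move=> r u Hu; rewrite /L -mulrA; exact: idealM (prod_ideal _ _) Hu.
have Hsq : forall p, p \in cv -> L (p.1 ^+ 2).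
  move=> [t g] pin /=.
  have [Hg Hy] := Hcv (t, g) pin.
  have Ig : I g := @span_min _ R^o I rs HI rsI g Hg.
  have [s Es0] := Hy x (Hrs x (JI x Jx)).
  have Es : t * x = s * g := Es0.
  have Hts : colon J I (t * s).
    move=> y Iy; have [c Ec0] := Hy y (Hrs y Iy).
    have Ec : t * y = c * g := Ec0.
    have -> : t * s * y = c * (t * x).
      by rewrite Es mulrAC Ec; ring.
    exact: idealM _ HJ (idealM _ HJ Jx).
  rewrite /L expr2 -mulrA Es mulrA.
  exact: prod_gen.
have [n Hn] := rad_sum HL Hsq.
by move: Hn; rewrite Ecv expr1n /L mul1r.
Qed.

End Dir2.

Section FinMin.
Variable R : comPzRingType.
Implicit Types (I J A B P Q : R -> Prop) (x y z r a b : R).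

Fixpoint prodl (Ps : seq (R -> Prop)) : R -> Prop :=
  match Ps with [::] => fun _ => True | P :: Ps' => ideal_prod P (prodl Ps') end.
Fixpoint allprime (Ps : seq (R -> Prop)) : Prop :=
  match Ps with [::] => True | P :: Ps' => is_prime_ideal P /\ allprime Ps' end.

Lemma prodl_cat Ps1 Ps2 x : prodl (Ps1 ++ Ps2) x ->
  ideal_prod (prodl Ps1) (prodl Ps2) x.
Proof.
elim: Ps1 x => [|P Ps1 IH] x /=.
  by move=> H; rewrite -[x]mul1r; apply: prod_gen.
move=> H; apply: prod_assoc; apply: prod_mono H => // y; exact: IH.
Qed.

Lemma allprime_cat Ps1 Ps2 : allprime Ps1 -> allprime Ps2 -> allprime (Ps1 ++ Ps2).
Proof. by elim: Ps1 => [//|P Ps1 IH] /= [HP H1] H2; split=> //; apply: IH. Qed.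

Lemma allprime_nth Ps i : allprime Ps -> (i < size Ps)%N ->
  is_prime_ideal (nth (fun _ => True) Ps i).
Proof.
elim: Ps i => [//|P Ps IH] [|i] /= [HP HPs] // lt.
exact: IH.
Qed.

Lemma prime_of_prodl P Ps : is_prime_ideal P -> allprime Ps ->
  (forall x, prodl Ps x -> P x) ->
  exists i, (i < size Ps)%N /\ forall x, nth (fun _ => True) Ps i x -> P x.
Proof.
move=> HP; elim: Ps => [|Q Ps IH] /=.
  by move=> _ H; exfalso; apply: (prime_one HP); apply: H.
move=> [HQ HPs] sub.
case: (pselect (forall x, Q x -> P x)) => [QP|NQP].
  by exists 0%N.
have [a [Qa Pa]] : exists a, Q a /\ ~ P a.
  apply: contrapT => H; apply: NQP => x Qx; apply: contrapT => Px.
  by apply: H; exists x.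
suff sub' : forall b, prodl Ps b -> P b.
  by have [i [lt Hi]] := IH HPs sub'; exists i.+1.
move=> b Hb; have : P (a * b) by apply: sub; apply: prod_gen.
by case: HP => _ _ /(_ _ _ _) H /H [].
Qed.

Hypothesis HFG : forall I, is_ideal I -> exists rs : seq R,
  (forall r, r \in rs -> I r) /\ forall x, I x -> span (M := R^o) rs x.

Lemma chain_fg (G : set (set R)) X1 (rs : seq R) :
  total_on G subset -> G X1 ->
  (forall r, r \in rs -> exists2 Y, G Y & Y r) ->
  exists X, [/\ G X, (X1 `<=` X)%classic & forall r, r \in rs -> X r].
Proof.
move=> tot GX1; elim: rs => [|r rs IH] Hrs.
  by exists X1; split.
have [X [GX X1X HX]] := IH (fun q qs => Hrs q (@mem_behead _ (r :: rs) _ qs)).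
have [Y GY Yr] := Hrs r (mem_head _ _).
have [Z [GZ XZ YZ]] := chain_common tot GX GY.
exists Z; split=> //; first by move=> x /X1X /XZ.
by move=> q; rewrite inE => /orP[/eqP ->|/HX /XZ //]; apply: YZ.
Qed.

Lemma prod_primes_zero : exists Ps, allprime Ps /\ forall x, prodl Ps x -> x = 0.
Proof.
apply: contrapT => NP.
pose bad (X : set R) := is_ideal X /\
  ~ exists Ps, allprime Ps /\ forall x, prodl Ps x -> X x.
pose F : set (set R) := fun X => X = set0 \/ bad X.
have FG X x : F X -> X x -> bad X by case=> [->|//].
have [B [FB Bmax]] : exists B, F B /\ forall C, (B `<` C)%classic -> ~ F C.
  apply: Zorn_bigcup => G GF tot.
  case: (pselect (exists X x, G X /\ X x)) => [[X1 [x1 [GX1 X1x]]]|none]; last first.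
    left; apply: funext => x; apply: propext; split=> // -[X GX Xx].
    by apply: none; exists X, x.
  have mg X x : G X -> X x -> bad X by move=> GX Xx; apply: (FG X x) => //; apply: GF.
  have HU : is_ideal (\bigcup_(X in G) X)%classic.
    split.
    + by exists X1 => //; case: (mg _ _ GX1 X1x) => [[]].
    + move=> u v [X GX Xu] [Y GY Yv].
      have [Z [GZ XZ YZ]] := chain_common tot GX GY.
      have [[_ ZD _] _] := mg _ _ GZ (XZ _ Xu).
      by exists Z => //; apply: ZD; [apply: XZ|apply: YZ].
    + move=> r u [X GX Xu]; have [[_ _ XZ] _] := mg _ _ GX Xu.
      by exists X => //; apply: XZ.
  right; split=> // -[Ps [HPs sub]].
  have [rs [rsU Urs]] := HFG HU.
  have [X [GX X1X HX]] := chain_fg tot GX1 rsU.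
  have [HXi Xbad] := mg _ _ GX (X1X _ X1x).
  apply: Xbad; exists Ps; split=> // x /sub /Urs.
  exact: (@span_min _ R^o X rs HXi HX).
have bB : bad B.
  case: FB => [E|//]; exfalso; apply: (Bmax (fun y => y = 0)).
    by rewrite E; split=> // H; have := H 0 (erefl 0).
  by right; split; [exact: zero_ideal|exact: NP].
case: bB => HB Bbad.
have NB1 : ~ B 1.
  by move=> B1; apply: Bbad; exists [::]; split=> // x _; apply: ideal1.
have [a [b [Bab [Ba Bb]]]] : exists a b, B (a * b) /\ ~ B a /\ ~ B b.
  apply: contrapT => H; apply: Bbad; exists [:: B]; split.
    split=> //; split=> // a b Bab; apply: contrapT => /not_orP [Na Nb].
    by apply: H; exists a, b.
  by move=> x /= Hx; apply: prod_subl HB x Hx.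
have ext c : ~ B c -> exists Ps, allprime Ps /\ forall x, prodl Ps x -> isum B (pr c) x.
  move=> Nc; apply: contrapT => H.
  apply: (Bmax (isum B (pr c))).
    split; first by move=> x Hx; apply: isum_l => //; apply: pr_ideal.
    by move=> sub; apply: Nc; apply: sub; apply: isum_r => //; apply: pr_self.
  by right; split=> //; apply: isum_ideal => //; apply: pr_ideal.
have [Ps1 [H1 S1]] := ext a Ba.
have [Ps2 [H2 S2]] := ext b Bb.
apply: Bbad; exists (Ps1 ++ Ps2); split; first exact: allprime_cat.
move=> x /prodl_cat Hx.
have := prod_mono S1 S2 Hx.
apply: prod_min => // _ _ [u [_ [Bu [r ->] ->]]] [u' [_ [Bu' [r' ->] ->]]].
have -> : (u + r * a) * (u' + r' * b) = (u' + r' * b) * u + (r * a) * u' + (r * r') * (a * b).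
  by ring.
by apply: idealD HB (idealD HB (idealM _ HB Bu) (idealM _ HB Bu')) (idealM _ HB Bab).
Qed.

Lemma fmmp : finitely_many_minimal_primes R.
Proof.
have [Ps [HPs H0]] := prod_primes_zero.
exists (size Ps), (fun i => nth (fun _ => True) Ps i) => P [HP Pmin].
have [i [lt Hi]] := prime_of_prodl HP HPs
  (fun x Hx => eq_ind_r P (ideal0 (prime_ideal HP)) (H0 x Hx)).
exists (Ordinal lt) => x /=; split; last exact: Hi.
exact: Pmin _ (allprime_nth HPs lt) Hi x.
Qed.

End FinMin.

Unset Implicit Arguments.

Theorem theorem1p4 (R : comPzRingType) :
  (multiplication_ring R /\ finitely_many_minimal_primes R) <->
  exists M : lmodType R,
    [/\ faithful_module M, noetherian_module M & distributive_module M].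
Proof.
split.
- case=> HM HF; exists R^o; split.
  + move=> r H; have E : r * 1 = 0 := H 1.
    by rewrite -E mulr1.
  + by apply: fg_noeth => N HN; exact: (@dir1_fg R HM HF N HN).
  + by apply: steph_distr; exact: mult_steph HM.
- case=> M [HFa HN HD].
  have HT : is_submodule (fun _ : M => True) by [].
  have [s0 [_ Hs0]] := noeth_fg HN HT.
  have [cov [Ecov Hcov]] := cover (distr_steph HD) s0.
  have Hc : forall p, p \in cov -> forall y, exists c, p.1 *: y = c *: p.2.
    by move=> p pin y; apply: (proj2 (Hcov p pin)); apply: Hs0.
  split.
  + exact: (@mult2 R M HFa HN HD cov Ecov Hc).
  + apply: fmmp; exact: (@fg2 R M HFa HN cov Ecov Hc).
Qed.
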